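(* Let $\mathcal{G}$ be a simple MAG with a given topological ordering of its vertices. Let $i$ be a vertex and let $\{i,j_1\},\dots,\{i,j_k\}$ be all heads of size two containing $i$ whose other element precedes $i$, ordered so that $j_1<\dots<j_k<i$. Then $$\mathrm{pa}(i)=\mathrm{tail}(\{i\})\subseteq\mathrm{tail}(\{i,j_1\})\subseteq\cdots\subseteq\mathrm{tail}(\{i,j_k\}).$$
   Context: A MAG is an acyclic directed mixed graph (directed and bidirected edges, no directed cycles) with $\mathrm{sib}(v)\cap\mathrm{an}(v)=\emptyset$ for all $v$ and in which every nonadjacent pair of vertices is m-separated by some set. A topological ordering is an ordering of the vertices in which every ancestor of $v$ precedes $v$. $\mathrm{barren}(W)=\{w\in W:\mathrm{de}(w)\cap W=\{w\}\}$; a nonempty set $H$ is a head if $\mathrm{barren}(H)=H$ and $H$ lies in a single district (bidirected-connected component) of the induced subgraph $\mathcal{G}_{\mathrm{an}(H)}$; $\mathrm{tail}(H)=(\mathrm{dis}_{\mathrm{an}(H)}(H)\setminus H)\cup\mathrm{pa}(\mathrm{dis}_{\mathrm{an}(H)}(H))$, where $\mathrm{dis}_{\mathrm{an}(H)}(H)$ is the district of $\mathcal{G}_{\mathrm{an}(H)}$ containing $H$. A MAG is simple if it has no head with more than two elements. *)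

(* Defs.v *)
(* Mixed graphs on a finite vertex type T:
   d x y  <->  directed edge x -> y ;  b x y <-> bidirected edge x <-> y. *)
From mathcomp Require Import all_boot.
Set Implicit Arguments. Unset Strict Implicit. Unset Printing Implicit Defensive.

Section MAG.
Variables (T : finType) (d b : rel T).

Definition an (v : T) : {set T} := [set u | connect d u v].
Definition anS (S : {set T}) : {set T} := \bigcup_(v in S) an v.
Definition de (v : T) : {set T} := [set u | connect d v u].
Definition pa (v : T) : {set T} := [set u | d u v].
Definition paS (S : {set T}) : {set T} := \bigcup_(v in S) pa v.
Definition sib (v : T) : {set T} := [set u | b v u].

Definition adj (u v : T) : bool := [|| d u v, d v u | b u v].
(* the edge between u and v has an arrowhead at v *)
Definition arrow_at (u v : T) : bool := d u v || b u v || b v u.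
Definition collider (u v w : T) : bool := arrow_at u v && arrow_at w v.

(* s describes the path x :: s (a path of distinct vertices with consecutive
   vertices adjacent) ending at y; it is m-connecting given Z *)
Definition mconnecting (x y : T) (Z : {set T}) (s : seq T) : Prop :=
  [/\ path adj x s, last x s = y, uniq (x :: s), x \notin Z /\ y \notin Z &
      forall k, 0 < k < size s ->
        let u := nth x (x :: s) k.-1 in
        let v := nth x (x :: s) k in
        let w := nth x (x :: s) k.+1 in
        if collider u v w then v \in anS Z else v \notin Z].

Definition msep (x y : T) (Z : {set T}) : Prop :=
  x \notin Z /\ y \notin Z /\ forall s, ~ mconnecting x y Z s.

Definition is_MAG : Prop :=
  [/\ symmetric b,
      (forall x y, d x y -> ~~ connect d y x),
      (forall v, sib v :&: an v = set0) &
      (forall x y, x != y -> ~~ adj x y -> exists Z, msep x y Z)].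

(* topological ordering, encoded by an injective position map *)
Definition topological (pos : T -> nat) : Prop :=
  injective pos /\ forall u v, u != v -> u \in an v -> pos u < pos v.

Definition barren (W : {set T}) : {set T} :=
  [set w in W | de w :&: W == [set w]].

(* district of x in the induced subgraph G_A *)
Definition brel_in (A : {set T}) : rel T :=
  [rel x y | [&& b x y, x \in A & y \in A]].
Definition dis_in (A : {set T}) (x : T) : {set T} :=
  [set y | (x \in A) && connect (brel_in A) x y].

Definition is_head (H : {set T}) : Prop :=
  [/\ H != set0, barren H = H &
      exists2 h, h \in H & H \subset dis_in (anS H) h].

(* the district of G_{an(H)} containing H (union of the districts of its
   elements; for a head these all coincide) *)
Definition disH (H : {set T}) : {set T} :=
  \bigcup_(h in H) dis_in (anS H) h.

Definition tail (H : {set T}) : {set T} :=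
  (disH H :\: H) :|: paS (disH H).

Definition simple_MAG : Prop := forall H, is_head H -> #|H| <= 2.

End MAG.

(* Main.v *)
Require Import Defs.
From mathcomp Require Import all_boot.
Set Implicit Arguments. Unset Strict Implicit.

Section Aux.
Variables (T : finType) (d b : rel T).

Lemma path_mem (A : {set T}) p : forall x, x \in A ->
  path (brel_in b A) x p -> last x p \in A.
Proof.
elim: p => [|z p IH] x xA //=.
case/andP=> /and3P[_ _ zA] pth; exact: IH.
Qed.

Lemma dis_mem (A : {set T}) x y : y \in dis_in b A x -> y \in A.
Proof.
rewrite inE => /andP[xA /connectP[p pth ->]]; exact: path_mem.
Qed.

Lemma dis_sub (A B : {set T}) x y : A \subset B -> y \in dis_in b A x -> y \in dis_in b B x.
Proof.
move=> AB; rewrite !inE => /andP[xA c]; rewrite (subsetP AB _ xA) /=.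
apply: connect_sub c => u v /and3P[buv uA vA]; apply: connect1.
by rewrite /brel_in /= buv (subsetP AB _ uA) (subsetP AB _ vA).
Qed.

Lemma brel_sym (A : {set T}) : symmetric b -> symmetric (brel_in b A).
Proof. by move=> sb x y; rewrite /brel_in /= sb; case: (b y x); case: (x \in A); case: (y \in A). Qed.

Lemma head_conn (A : {set T}) i j h : symmetric b -> i \in dis_in b A h -> j \in dis_in b A h ->
  connect (brel_in b A) i j.
Proof.
move=> sb; rewrite !inE => /andP[_ c1] /andP[_ c2].
apply: connect_trans c2; by rewrite (sym_connect_sym (brel_sym A sb)).
Qed.

End Aux.

Theorem lemma3p14 (T : finType) (d b : rel T) (pos : T -> nat) (i : T) :
  is_MAG d b -> simple_MAG d b -> topological d pos ->
  [/\ pa d i = tail d b [set i],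
      (forall j, is_head d b [set i; j] -> pos j < pos i ->
         tail d b [set i] \subset tail d b [set i; j]) &
      (forall j j', is_head d b [set i; j] -> is_head d b [set i; j'] ->
         pos j < pos i -> pos j' < pos i -> pos j < pos j' ->
         tail d b [set i; j] \subset tail d b [set i; j'])].
Proof.
move=> [sb acyc anc maxi] simp [pinj ptop].
have iai : forall v, v \in an d v by move=> v; rewrite inE connect0.
have Hdis1 : disH d b [set i] = [set i].
  rewrite /disH big_set1 /anS big_set1.
  apply/setP => y; rewrite in_set1; apply/idP/idP; last first.
    by move/eqP->; rewrite inE iai connect0.
  rewrite inE => /andP[_ /connectP[p pth ->]].
  elim: p pth => [|z p IH] //= /andP[/and3P[biz _ zA] _].
  have : z \in sib b i :&: an d i by rewrite inE [z \in sib b i]inE biz zA.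
  by rewrite anc inE.
have P1 : pa d i = tail d b [set i].
  rewrite /tail Hdis1 setDv set0U /paS big_set1 //.
have inH : forall j, i \in disH d b [set i; j].
  move=> j; apply/bigcupP; exists i; first by rewrite !inE eqxx.
  rewrite inE connect0 andbT; apply/bigcupP; exists i; first by rewrite !inE eqxx.
  exact: iai.
split=> //.
  move=> j _ _; rewrite -P1; apply/subsetP => x xp.
  rewrite /tail inE; apply/orP; right; apply/bigcupP; exists i => //; exact: inH.
move=> j j' [_ bar1 [h hH hsub]] [_ bar2 [h' hH' hsub']] lji lj'i ljj'.
have nij : j != i by apply/eqP=> E; move: lji; rewrite E ltnn.
have nij' : j' != i by apply/eqP=> E; move: lj'i; rewrite E ltnn.
have njj' : j != j' by apply/eqP=> E; move: ljj'; rewrite E ltnn.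
have barF : forall (H : {set T}) u v, barren d H = H -> u \in H -> v \in H ->
    connect d u v -> u = v.
  move=> H u v bH uH vH c; move: uH; rewrite -bH inE => /andP[_ /eqP E].
  have : v \in de d u :&: H by rewrite inE [v \in de d u]inE c vH.
  by rewrite E in_set1 => /eqP.
have nij_a : ~~ connect d i j.
  apply/negP=> c; move: (barF _ _ _ bar1 (setU11 _ _) (setU1r _ (set11 _)) c).
  by move/eqP; rewrite eq_sym (negbTE nij).
have nji_a : ~~ connect d j i.
  apply/negP=> c; move: (barF _ _ _ bar1 (setU1r _ (set11 _)) (setU11 _ _) c).
  by move/eqP; rewrite (negbTE nij).
have nij'_a : ~~ connect d i j'.
  apply/negP=> c; move: (barF _ _ _ bar2 (setU11 _ _) (setU1r _ (set11 _)) c).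
  by move/eqP; rewrite eq_sym (negbTE nij').
have nj'i_a : ~~ connect d j' i.
  apply/negP=> c; move: (barF _ _ _ bar2 (setU1r _ (set11 _)) (setU11 _ _) c).
  by move/eqP; rewrite (negbTE nij').
have nj'j_a : ~~ connect d j' j.
  apply/negP=> c; have := ptop j' j; rewrite eq_sym njj' inE c => /(_ isT isT).
  by rewrite ltnNge ltnW.
have cij : connect (brel_in b (anS d [set i; j])) i j.
  apply: (@head_conn _ b _ _ _ h sb); apply: (subsetP hsub); by rewrite !inE eqxx ?orbT.
have cij' : connect (brel_in b (anS d [set i; j'])) i j'.
  apply: (@head_conn _ b _ _ _ h' sb); apply: (subsetP hsub'); by rewrite !inE eqxx ?orbT.
have cjj' : connect d j j'.
  apply/negPn/negP => ncj.
  pose H3 := [set i; j; j'].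
  have A1 : anS d [set i; j] \subset anS d H3.
    apply/subsetP=> x /bigcupP[v vH xv]; apply/bigcupP; exists v => //.
    by move: vH; rewrite !inE => /orP[]->; rewrite ?orbT.
  have A2 : anS d [set i; j'] \subset anS d H3.
    apply/subsetP=> x /bigcupP[v vH xv]; apply/bigcupP; exists v => //.
    by move: vH; rewrite !inE => /orP[]->; rewrite ?orbT.
  have iA : i \in anS d [set i; j] by apply/bigcupP; exists i; rewrite ?inE ?eqxx.
  have hd : is_head d b H3.
    split.
    - by apply/set0Pn; exists i; rewrite !inE eqxx.
    - apply/setP=> w; rewrite inE; apply/andP/idP => [[] //|wH]; split=> //.
      apply/eqP/setP=> u; rewrite !inE.
      apply/andP/eqP => [[c uH]|->]; last first.
        by split; [exact: connect0 | move: wH; rewrite /H3 !inE].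
      move: wH uH c; rewrite !inE.
      move=> /orP[/orP[]|]/eqP-> /orP[/orP[]|]/eqP E; subst u => //;
        rewrite ?(negbTE nij_a) ?(negbTE nji_a) ?(negbTE nij'_a) ?(negbTE nj'i_a)
                ?(negbTE nj'j_a) ?(negbTE ncj) //.
    - exists i; first by rewrite !inE eqxx.
      apply/subsetP=> w; rewrite !inE => /orP[/orP[]|]/eqP->.
      + by rewrite connect0 (subsetP A1 _ iA).
      + rewrite (subsetP A1 _ iA) /=.
        apply: connect_sub cij => u v e; apply: connect1.
        by move: e => /and3P[buv uA vA]; rewrite /brel_in /= buv (subsetP A1 _ uA) (subsetP A1 _ vA).
      + rewrite (subsetP A1 _ iA) /=.
        apply: connect_sub cij' => u v e; apply: connect1.
        by move: e => /and3P[buv uA vA]; rewrite /brel_in /= buv (subsetP A2 _ uA) (subsetP A2 _ vA).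
  have := simp _ hd; have -> : H3 = i |: (j |: [set j']) by apply/setP=> z; rewrite /H3 !inE orbA.
  rewrite !cardsU1 cards1 !inE.
  by rewrite eq_sym (negbTE nij) eq_sym (negbTE nij') (negbTE njj').
have Asub : anS d [set i; j] \subset anS d [set i; j'].
  apply/subsetP=> x /bigcupP[v]; rewrite !inE => /orP[]/eqP-> xv.
    by apply/bigcupP; exists i; rewrite ?inE ?eqxx.
  apply/bigcupP; exists j'; first by rewrite !inE eqxx orbT.
  by rewrite inE; apply: connect_trans cjj'; move: xv; rewrite ?inE.
have Dsub : disH d b [set i; j] \subset dis_in b (anS d [set i; j']) i.
  apply/subsetP=> x /bigcupP[v /set2P[]-> xv].
    exact: dis_sub Asub xv.
  apply: dis_sub Asub _; move: xv; rewrite !inE => /andP[jA c].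
  rewrite (connect_trans cij c) andbT.
  by apply/bigcupP; exists i; rewrite ?inE ?eqxx.
have Dsub' : disH d b [set i; j] \subset disH d b [set i; j'].
  apply: (subset_trans Dsub); apply/subsetP=> x xD; apply/bigcupP; exists i => //.
  by rewrite !inE eqxx.
have j'nA : j' \notin anS d [set i; j].
  apply/negP=> /bigcupP[v]; rewrite !inE => /orP[]/eqP-> c.
    by move: c; rewrite ?inE (negbTE nj'i_a).
  by move: c; rewrite ?inE (negbTE nj'j_a).
apply/subsetP=> x; rewrite /tail => /setUP[/setDP[xD nxH]|xp].
  apply/setUP; left; apply/setDP; split; first exact: (subsetP Dsub').
  move: nxH; rewrite !inE negb_or => /andP[nxi _]; rewrite negb_or nxi /=.
  apply/eqP=> E; subst x; move: xD => /bigcupP[v _ /dis_mem]; by rewrite (negbTE j'nA).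
apply/setUP; right; move: xp => /bigcupP[v vD xv]; apply/bigcupP; exists v => //.
exact: (subsetP Dsub').
Qed.
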